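(* Let $0<b\le 0.01$ and let $(x_3,x,x,y_3,y,y)$ with $x_3,y_3,x,y>0$ be a point of the curve of equilibria $\mathcal C$. Let $$M=\begin{pmatrix}-x_3(1-y_3)-y_3(1-x_3)-4xy & -4y & -4x\\ x(y_3+y)/2 & -bx_3/x & x\\ y(x_3+x)/2 & y & -by_3/y\end{pmatrix}=(m_{ij}),$$ and $b_2=(m_{11}m_{22}-m_{12}m_{21})+(m_{22}m_{33}-m_{23}m_{32})+(m_{11}m_{33}-m_{13}m_{31})$. Then $\det(M)>b_2\,\mathrm{trace}(M)$.
   Context: Haploid unlinked subfunctionalization model with mutation rate $b$, $\alpha=1-3b$, $w=x_3+y_3-x_3y_3+x_1y_2+x_2y_1$, vector field $F$: $F_{x_3}=x_3(\alpha-w)$; $F_{x_2}=-x_2w+x_2(y_3+y_1)+bx_3-2bx_2$; $F_{x_1}=-x_1w+x_1(y_3+y_2)+bx_3-2bx_1$; $F_{y_3}=y_3(\alpha-w)$; $F_{y_2}=-y_2w+y_2(x_3+x_1)+by_3-2by_2$; $F_{y_1}=-y_1w+y_1(x_3+x_2)+by_3-2by_1$. The curve of equilibria $\mathcal C$ is the one-parameter family of fixed points of $dz/dt=F(z)$ with $x_1=x_2=x$, $y_1=y_2=y$, parametrized by $x_3$ via $y_3=\frac{-d_1+\sqrt{d_1^2-4d_0d_2}}{2d_2}$ with $d_2=-(1-x_3)^2$, $d_1=2(1-x_3)^2-4b(1-x_3)+2b^2(1+x_3)$, $d_0=-(1-x_3)^2+4b(1-x_3)-b^2(5-2x_3)+b^3$,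 and $x=\frac{\Gamma-2bx_3}{2(y_3-\beta)}$, $y=\frac{\Gamma-2by_3}{2(x_3-\beta)}$, $\beta=1-b$, $\Gamma=x_3+y_3-x_3y_3-\alpha$. *)

(* Defs.v *)
From Stdlib Require Import Reals Lra.
Open Scope R_scope.

(* Haploid unlinked subfunctionalization model, mutation rate b. *)
Definition alpha (b : R) : R := 1 - 3 * b.

Definition wfit (x3 x2 x1 y3 y2 y1 : R) : R :=
  x3 + y3 - x3 * y3 + x1 * y2 + x2 * y1.

Definition F_x3 (b x3 x2 x1 y3 y2 y1 : R) : R :=
  x3 * (alpha b - wfit x3 x2 x1 y3 y2 y1).
Definition F_x2 (b x3 x2 x1 y3 y2 y1 : R) : R :=
  - x2 * wfit x3 x2 x1 y3 y2 y1 + x2 * (y3 + y1) + b * x3 - 2 * b * x2.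
Definition F_x1 (b x3 x2 x1 y3 y2 y1 : R) : R :=
  - x1 * wfit x3 x2 x1 y3 y2 y1 + x1 * (y3 + y2) + b * x3 - 2 * b * x1.
Definition F_y3 (b x3 x2 x1 y3 y2 y1 : R) : R :=
  y3 * (alpha b - wfit x3 x2 x1 y3 y2 y1).
Definition F_y2 (b x3 x2 x1 y3 y2 y1 : R) : R :=
  - y2 * wfit x3 x2 x1 y3 y2 y1 + y2 * (x3 + x1) + b * y3 - 2 * b * y2.
Definition F_y1 (b x3 x2 x1 y3 y2 y1 : R) : R :=
  - y1 * wfit x3 x2 x1 y3 y2 y1 + y1 * (x3 + x2) + b * y3 - 2 * b * y1.

Definition is_equilibrium (b x3 x2 x1 y3 y2 y1 : R) : Prop :=
  F_x3 b x3 x2 x1 y3 y2 y1 = 0 /\ F_x2 b x3 x2 x1 y3 y2 y1 = 0 /\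
  F_x1 b x3 x2 x1 y3 y2 y1 = 0 /\ F_y3 b x3 x2 x1 y3 y2 y1 = 0 /\
  F_y2 b x3 x2 x1 y3 y2 y1 = 0 /\ F_y1 b x3 x2 x1 y3 y2 y1 = 0.

(* Parametrization of the curve C by x3. *)
Definition d2 (x3 : R) : R := - (1 - x3) ^ 2.
Definition d1 (b x3 : R) : R :=
  2 * (1 - x3) ^ 2 - 4 * b * (1 - x3) + 2 * b ^ 2 * (1 + x3).
Definition d0 (b x3 : R) : R :=
  - (1 - x3) ^ 2 + 4 * b * (1 - x3) - b ^ 2 * (5 - 2 * x3) + b ^ 3.

Definition C_y3 (b x3 : R) : R :=
  (- d1 b x3 + sqrt (d1 b x3 ^ 2 - 4 * d0 b x3 * d2 x3)) / (2 * d2 x3).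

Definition betaB (b : R) : R := 1 - b.
Definition Gamma (b x3 y3 : R) : R := x3 + y3 - x3 * y3 - alpha b.

Definition C_x (b x3 y3 : R) : R := (Gamma b x3 y3 - 2 * b * x3) / (2 * (y3 - betaB b)).
Definition C_y (b x3 y3 : R) : R := (Gamma b x3 y3 - 2 * b * y3) / (2 * (x3 - betaB b)).

Definition on_curve_C (b x3 x y3 y : R) : Prop :=
  is_equilibrium b x3 x x y3 y y /\
  y3 = C_y3 b x3 /\ x = C_x b x3 y3 /\ y = C_y b x3 y3.

Definition m11 (x3 x y3 y : R) : R := - x3 * (1 - y3) - y3 * (1 - x3) - 4 * x * y.
Definition m12 (y : R) : R := - 4 * y.
Definition m13 (x : R) : R := - 4 * x.
Definition m21 (x y3 y : R) : R := x * (y3 + y) / 2.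
Definition m22 (b x3 x : R) : R := - b * x3 / x.
Definition m23 (x : R) : R := x.
Definition m31 (x3 x y : R) : R := y * (x3 + x) / 2.
Definition m32 (y : R) : R := y.
Definition m33 (b y3 y : R) : R := - b * y3 / y.

Definition det3 (a11 a12 a13 a21 a22 a23 a31 a32 a33 : R) : R :=
  a11 * (a22 * a33 - a23 * a32) - a12 * (a21 * a33 - a23 * a31)
  + a13 * (a21 * a32 - a22 * a31).

Definition detM (b x3 x y3 y : R) : R :=
  det3 (m11 x3 x y3 y) (m12 y) (m13 x)
       (m21 x y3 y) (m22 b x3 x) (m23 x)
       (m31 x3 x y) (m32 y) (m33 b y3 y).

Definition traceM (b x3 x y3 y : R) : R :=
  m11 x3 x y3 y + m22 b x3 x + m33 b y3 y.

Definition b2M (b x3 x y3 y : R) : R :=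
  (m11 x3 x y3 y * m22 b x3 x - m12 y * m21 x y3 y)
  + (m22 b x3 x * m33 b y3 y - m23 x * m32 y)
  + (m11 x3 x y3 y * m33 b y3 y - m13 x * m31 x3 x y).

(* Main.v *)
Require Import Defs.
From Stdlib Require Import Reals Lra Psatz.
Open Scope R_scope.

Lemma final_pos (A C D x y x3 y3 : R) :
  0 < x -> 0 < y -> 0 < x3 -> 0 < y3 -> 0 < C -> 0 < D ->
  x < A -> y < A ->
  0 < (A+C)*(A+D)*(C+D) + 2*(A+C)*x*y*(y3+y) + 2*(A+D)*x*y*(x3+x)
      - (C+D)*x*y - 2*x*y*y*(x3+x) - 2*x*x*y*(y3+y).
Proof.
  intros Hx Hy Hx3 Hy3 HC HD HAx HAy.
  assert (HA : 0 < A) by lra.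
  assert (h1 : x*y < (A+C)*(A+D)).
  { assert (x*y < A*A) by (apply Rmult_le_0_lt_compat; lra). nra. }
  assert (h2 : (C+D)*(x*y) < (C+D)*((A+C)*(A+D))) by (apply Rmult_lt_compat_l; lra).
  assert (h3 : 2*x*x*y*(y3+y) <= 2*(A+C)*x*y*(y3+y)).
  { assert (0 < 2*x*y*(y3+y)) by (repeat apply Rmult_lt_0_compat; lra).
    nra. }
  assert (h4 : 2*x*y*y*(x3+x) <= 2*(A+D)*x*y*(x3+x)).
  { assert (0 < 2*x*y*(x3+x)) by (repeat apply Rmult_lt_0_compat; lra).
    nra. }
  nra.
Qed.

Lemma AgtX (b u v x y : R) :
  0 < b -> b <= 1/100 -> 0 < x -> 0 < y -> 0 < u -> u < 1 -> 0 < v -> v < 1 ->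
  u * v = 3*b + 2*x*y ->
  2 * x * (v - b) = u*v - b - 2*b*u ->
  2 * y * (u - b) = u*v - b - 2*b*v ->
  v - b - y > 0 -> u - b - x > 0 ->
  x < (1-u)*v + (1-v)*u + 4*x*y /\ y < (1-u)*v + (1-v)*u + 4*x*y.
Proof.
  intros Hb Hb1 Hx Hy Hu Hu1 Hv Hv1 E1 E2 E3 HS HT.
  assert (xu : x < u/2).
  { assert (2*x*(v-b) < u*(v-b)) by nra.
    destruct (Rle_or_lt (u/2) x) as [H0|H0]; [|exact H0].
    assert (u*(v-b) <= 2*x*(v-b)) by (apply Rmult_le_compat_r; lra). lra. }
  assert (yv : y < v/2).
  { assert (2*y*(u-b) < v*(u-b)) by nra.
    destruct (Rle_or_lt (v/2) y) as [H0|H0]; [|exact H0].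
    assert (v*(u-b) <= 2*y*(u-b)) by (apply Rmult_le_compat_r; lra). lra. }
  assert (xyl : x*y < (u/2)*(v/2)) by (apply Rmult_le_0_lt_compat; lra).
  assert (uvs : u*v < 6*b) by nra.
  assert (p : 0 < u*v) by (apply Rmult_lt_0_compat; lra).
  assert (k1 : 2*u*v < v + u/2).
  { assert (2*(u*v) <= (v+u/2)*(v+u/2)) by (pose proof (pow2_ge_0 (v - u/2)); nra).
    destruct (Rle_or_lt (v+u/2) (2*u*v)) as [H0|H0]; [|exact H0].
    assert ((v+u/2)*(v+u/2) <= (2*u*v)*(2*u*v)) by (apply Rmult_le_compat; lra).
    assert (2*u*v*(2*u*v) < 2*(u*v)) by nra. lra. }
  assert (0 < x*y) by (apply Rmult_lt_0_compat; lra).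
  split; nra.
Qed.

Theorem lemma3 (b x3 x y3 y : R) :
  0 < b -> b <= 1 / 100 ->
  0 < x3 -> 0 < y3 -> 0 < x -> 0 < y ->
  on_curve_C b x3 x y3 y ->
  detM b x3 x y3 y > b2M b x3 x y3 y * traceM b x3 x y3 y.
Proof.
  intros Hb Hb1 Hx3 Hy3 Hx Hy [[Ea [Eb [_ [_ [Ec _]]]]] _].
  unfold F_x3, F_x2, F_y2, wfit, alpha in *.
  assert (W : x3 + y3 - x3*y3 + x*y + x*y = 1 - 3*b).
  { assert (x3 * ((1 - 3*b) - (x3 + y3 - x3*y3 + x*y + x*y)) = 0) by exact Ea.
    apply Rmult_integral in H as [H|H]; lra. }
  rewrite W in Eb, Ec.
  assert (S : x * (1 - b - y3 - y) = b * x3) by lra.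
  assert (T : y * (1 - b - x3 - x) = b * y3) by lra.
  assert (S' : 1 - b - y3 - y > 0).
  { destruct (Rle_or_lt (1 - b - y3 - y) 0) as [H0|H0]; [|exact H0].
    assert (x * (1 - b - y3 - y) <= 0) by nra.
    assert (0 < b*x3) by (apply Rmult_lt_0_compat; lra). lra. }
  assert (T' : 1 - b - x3 - x > 0).
  { destruct (Rle_or_lt (1 - b - x3 - x) 0) as [H0|H0]; [|exact H0].
    assert (y * (1 - b - x3 - x) <= 0) by nra.
    assert (0 < b*y3) by (apply Rmult_lt_0_compat; lra). lra. }
  destruct (AgtX b (1-x3) (1-y3) x y) as [HAx HAy]; try lra.
  set (A := x3*(1-y3) + y3*(1-x3) + 4*x*y).
  set (C := b*x3/x). set (D := b*y3/y).
  assert (HC : 0 < C) by (unfold C; apply Rdiv_lt_0_compat; nra).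
  assert (HD : 0 < D) by (unfold D; apply Rdiv_lt_0_compat; nra).
  assert (key : detM b x3 x y3 y - b2M b x3 x y3 y * traceM b x3 x y3 y =
     (A+C)*(A+D)*(C+D) + 2*(A+C)*x*y*(y3+y) + 2*(A+D)*x*y*(x3+x)
      - (C+D)*x*y - 2*x*y*y*(x3+x) - 2*x*x*y*(y3+y)).
  { unfold detM, b2M, traceM, det3, m11, m12, m13, m21, m22, m23, m31, m32, m33, A, C, D.
    field; lra. }
  assert (P := final_pos A C D x y x3 y3 Hx Hy Hx3 Hy3 HC HD).
  assert (x < A) by (unfold A; lra).
  assert (y < A) by (unfold A; lra).
  lra.
Qed.
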